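(* Let $(\mathcal{S},d_{\mathcal{S}})$, $(\mathcal{A},d_{\mathcal{A}})$ be metric spaces, $\gamma\in[0,1)$, $r$ a reward function, $\pi,\pi'$ policies with $\pi'$ being $L_{\pi'}$-LC, and $p,p'$ configurations. Then $$\big\|A_{\pi,p}^{\pi',p'}\big\|_L\le\big\|A_{\pi,p}^{\pi',p}\big\|_L+(L_{\pi'}+1)\big\|A_{\pi,p}^{\pi,p'}\big\|_L.$$
   Context: $r:\mathcal{S}\times\mathcal{A}\times\mathcal{S}\to\mathbb{R}$. A configuration is a Markov kernel $p(\cdot|s,a)$ on $\mathcal{S}$; a policy is a Markov kernel $\pi(\cdot|s)$ on $\mathcal{A}$. Value functions (assumed well defined): $V_{\pi,p}(s)=\int\pi(da|s)\int p(ds'|s,a)(r(s,a,s')+\gamma V_{\pi,p}(s'))$, $Q_{\pi,p}(s,a)=\int p(ds'|s,a)(r(s,a,s')+\gamma V_{\pi,p}(s'))$, $U_{\pi,p}(s,a,s')=r(s,a,s')+\gamma V_{\pi,p}(s')$. Relative advantages: $A_{\pi,p}^{\pi',p}(s)=\int\pi'(da|s)(Q_{\pi,p}(s,a)-V_{\pi,p}(s))$; $A_{\pi,p}^{\pi,p'}(s,a)=\int p'(ds'|s,a)(U_{\pi,p}(s,a,s')-Q_{\pi,p}(s,a))$, a function on $\mathcal{S}\times\mathcal{A}$; $A_{\pi,p}^{\pi',p'}(s)=\int\pi'(da|s)\int p'(ds'|s,a)(U_{\pi,p}(s,a,s')-V_{\pi,p}(s))$. $\|\cdot\|_L$ is the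 Lipschitz semi-norm, with $\mathcal{S}\times\mathcal{A}$ carrying the metric $d_{\mathcal{S}}(s,\bar s)+d_{\mathcal{A}}(a,\bar a)$. $\mathcal{W}(\mu,\nu)=\sup_{\|f\|_L\le1}|\int f\,d(\mu-\nu)|$, and $\pi'$ is $L_{\pi'}$-LC if $\mathcal{W}(\pi'(\cdot|s),\pi'(\cdot|\bar s))\le L_{\pi'}d_{\mathcal{S}}(s,\bar s)$ for all $s,\bar s$. *)

(* Defs.v *)
From HB Require Import structures.
From mathcomp Require Import all_boot all_order all_algebra.
From mathcomp Require Import all_classical all_reals all_analysis.
Set Implicit Arguments. Unset Strict Implicit. Unset Printing Implicit Defensive.
Import Order.TTheory GRing.Theory Num.Theory.
Local Open Scope classical_set_scope.
Local Open Scope ring_scope.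

Section Defs.
Variable R : realType.

Definition is_metric (T : Type) (d : T -> T -> R) : Prop :=
  (forall x y, 0 <= d x y) /\ (forall x y, d x y = 0 <-> x = y) /\
  (forall x y, d x y = d y x) /\ (forall x y z, d x z <= d x y + d y z).

(* Lipschitz semi-norm ||f||_L = sup_{x <> y} |f x - f y| / d(x,y)
   (value in \bar R, +oo if f is not Lipschitz; 0 on a one-point space) *)
Definition lipnorm (T : Type) (d : T -> T -> R) (f : T -> R) : \bar R :=
  ereal_sup [set e | e = 0%E \/
     exists x y, 0 < d x y /\ e = ((`|f x - f y| / d x y)%:E)].

Definition lipnorm2 (S A : Type) (dS : S -> S -> R) (dA : A -> A -> R)
    (f : S -> A -> R) : \bar R :=
  lipnorm (fun z w : S * A => dS z.1 w.1 + dA z.2 w.2) (fun z => f z.1 z.2).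

(* Kantorovich-Rubinstein (1-)Wasserstein distance:
   sup over 1-Lipschitz f (for which both integrals exist) of |∫f d(mu - nu)| *)
Definition wasserstein (d : measure_display) (T : measurableType d)
    (dT : T -> T -> R) (mu nu : probability T R) : \bar R :=
  ereal_sup [set e | exists f : T -> R,
     (forall x y, `|f x - f y| <= dT x y) /\
     mu.-integrable setT (EFin \o f) /\ nu.-integrable setT (EFin \o f) /\
     e = (`|Rintegral mu setT f - Rintegral nu setT f|)%:E].

Definition policy_LC (dS' dA' : measure_display) (S : measurableType dS')
    (A : measurableType dA') (dS : S -> S -> R) (dA : A -> A -> R)
    (pi : S -> probability A R) (L : R) : Prop :=
  forall s sb, (wasserstein dA (pi s) (pi sb) <= (L * dS s sb)%:E)%E.

Variables (dS' dA' : measure_display) (S : measurableType dS')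
  (A : measurableType dA').

Definition Ufun (gamma : R) (r : S -> A -> S -> R) (V : S -> R) s a s' : R :=
  r s a s' + gamma * V s'.

Definition Qfun (gamma : R) (r : S -> A -> S -> R) (V : S -> R)
    (p : S -> A -> probability S R) s a : R :=
  Rintegral (p s a) setT (Ufun gamma r V s a).

Definition adv_pol (gamma : R) r V p (pi' : S -> probability A R) (s : S) : R :=
  Rintegral (pi' s) setT (fun a => Qfun gamma r V p s a - V s).

Definition adv_conf (gamma : R) r V p (p' : S -> A -> probability S R)
    (s : S) (a : A) : R :=
  Rintegral (p' s a) setT (fun s' => Ufun gamma r V s a s' - Qfun gamma r V p s a).

Definition adv_both (gamma : R) r V (pi' : S -> probability A R)
    (p' : S -> A -> probability S R) (s : S) : R :=
  Rintegral (pi' s) setT (fun a =>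
    Rintegral (p' s a) setT (fun s' => Ufun gamma r V s a s' - V s)).

End Defs.

(* Main.v *)
Require Import Defs.
From HB Require Import structures.
From mathcomp Require Import all_boot all_order all_algebra.
From mathcomp Require Import all_classical all_reals all_analysis.
From mathcomp Require Import measurable_realfun.
From mathcomp Require Import lra.
Import Order.TTheory GRing.Theory Num.Theory.
Local Open Scope classical_set_scope.
Local Open Scope ring_scope.
Set Implicit Arguments. Unset Strict Implicit.
Section H. Context (R : realType) d (T : measurableType d) (P : probability T R).
Lemma Rint_cst (c : R) : Rintegral P setT (fun _ => c) = c.
Proof. rewrite Rintegral_cst// (_ : fine _ = 1) ?mulr1//.
have := probability_setT P. by move=> /= ->. Qed.
Lemma int_cst (c : R) : P.-integrable setT (EFin \o (fun _ => c)).
Proof. exact: finite_measure_integrable_cst. Qed.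
Lemma meas_of_int (f : T -> R) : P.-integrable setT (EFin \o f) -> measurable_fun setT f.
Proof. by move=> /(measurable_int _)/measurable_EFinP. Qed.
Lemma int_le (f g : T -> R) : measurable_fun setT f -> (forall x, `|f x| <= `|g x|) ->
  P.-integrable setT (EFin \o g) -> P.-integrable setT (EFin \o f).
Proof.
move=> mf fg ig; apply: le_integrable ig => //.
  exact/measurable_EFinP.
by move=> x _ /=; rewrite lee_fin.
Qed.
Lemma int_add (f g : T -> R) : P.-integrable setT (EFin \o f) ->
  P.-integrable setT (EFin \o g) -> P.-integrable setT (EFin \o (fun x => f x + g x)).
Proof. move=> i1 i2; exact: (integrableD _ i1 i2). Qed.
Lemma int_sub (f g : T -> R) : P.-integrable setT (EFin \o f) ->
  P.-integrable setT (EFin \o g) -> P.-integrable setT (EFin \o (fun x => f x - g x)).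
Proof. move=> i1 i2; exact: (integrableB _ i1 i2). Qed.
Lemma int_scale (f : T -> R) c : P.-integrable setT (EFin \o f) ->
  P.-integrable setT (EFin \o (fun x => f x * c)).
Proof. move=> i1; exact: (integrableZr _ c i1). Qed.
End H.

Lemma lipnorm_ge0 (R : realType) T (d : T -> T -> R) f : (0 <= lipnorm d f)%E.
Proof. by apply: ereal_sup_ubound; left. Qed.

Lemma lip_bound (R : realType) T (d : T -> T -> R) f n x y :
  lipnorm d f = n%:E -> 0 < d x y -> `|f x - f y| <= n * d x y.
Proof.
move=> E dp.
have H : ((`|f x - f y| / d x y)%:E <= lipnorm d f)%E.
  by apply: ereal_sup_ubound; right; exists x, y.
by rewrite E lee_fin ler_pdivrMr in H.
Qed.

Lemma W_bound (R : realType) (kA : measure_display) (A : measurableType kA)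
  (dA : A -> A -> R) (mu nu : probability A R) (h : A -> R) (K : R) :
  (forall x y, `|h x - h y| <= dA x y) -> mu.-integrable setT (EFin \o h) ->
  nu.-integrable setT (EFin \o h) -> (wasserstein dA mu nu <= K%:E)%E ->
  `|Rintegral mu setT h - Rintegral nu setT h| <= K.
Proof.
move=> hl im iN W; rewrite -lee_fin; apply: le_trans W.
by apply: ereal_sup_ubound; exists h.
Qed.

Lemma W_ge0 (R : realType) (kA : measure_display) (A : measurableType kA)
  (dA : A -> A -> R) (mu nu : probability A R)
  (hp : forall x y, 0 <= dA x y) :
  (0 <= wasserstein dA mu nu)%E.
Proof.
apply: ereal_sup_ubound; exists (fun _ => 0); split.
  by move=> x y; rewrite subrr normr0.
split; first exact: int_cst.
split; first exact: int_cst.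
by rewrite !Rint_cst subrr normr0.
Qed.

Lemma G_bound (R : realType) (kS kA : measure_display)
  (S : measurableType kS) (A : measurableType kA)
  (dS : S -> S -> R) (dA : A -> A -> R) (pi' : S -> probability A R) (L : R)
  (hLC : policy_LC dS dA pi' L) (f : S -> A -> R) (n2 : R) (n2ge0 : 0 <= n2)
  (hfa : forall s a b, `|f s a - f s b| <= n2 * dA a b)
  (hfs : forall s sb a, `|f s a - f sb a| <= n2 * dS s sb)
  (hint : forall s, (pi' s).-integrable setT (EFin \o f s)) s sb :
  `|Rintegral (pi' s) setT (f s) - Rintegral (pi' sb) setT (f sb)|
     <= (L + 1) * n2 * dS s sb.
Proof.
have mf : forall t, measurable_fun setT (f t) by move=> t; exact: meas_of_int (hint t).
have iD : (pi' sb).-integrable setT (EFin \o (fun a => f s a - f sb a)).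
  apply: (@int_le _ _ _ _ _ (fun _ => n2 * dS s sb)); [exact: measurable_funB | | exact: int_cst].
  move=> a; apply: (le_trans (hfs s sb a)); exact: ler_norm.
have iS : (pi' sb).-integrable setT (EFin \o f s).
  apply: (@int_le _ _ _ _ _ (fun a => f sb a + (f s a - f sb a))); [exact: mf| |exact: int_add].
  by move=> a; rewrite subrKC.
have -> : Rintegral (pi' s) setT (f s) - Rintegral (pi' sb) setT (f sb) =
   (Rintegral (pi' s) setT (f s) - Rintegral (pi' sb) setT (f s)) +
   Rintegral (pi' sb) setT (fun a => f s a - f sb a).
  have EB : Rintegral (pi' sb) setT (fun a => f s a - f sb a) = Rintegral (pi' sb) setT (f s) - Rintegral (pi' sb) setT (f sb) := RintegralB measurableT iS (hint sb).
  rewrite EB. set a := Rintegral _ _ _. set b := Rintegral _ _ _. set c := Rintegral _ _ _. lra.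
have -> : (L + 1) * n2 * dS s sb = n2 * L * dS s sb + n2 * dS s sb by lra.
apply: (le_trans (ler_normD _ _)); apply: lerD; last first.
  apply: (le_trans (@le_normr_Rintegral _ _ _ _ _ _ measurableT iD)).
  rewrite -[X in _ <= X](@Rint_cst _ _ _ (pi' sb)).
  have iA : (pi' sb).-integrable setT (EFin \o (fun a => `|f s a - f sb a|)).
    apply: (@int_le _ _ _ _ _ (fun a => f s a - f sb a)) => //.
      by apply: measurableT_comp => //; exact: measurable_funB.
    by move=> a; rewrite normr_id.
  apply: le_Rintegral => //; first exact: int_cst.
move: n2ge0; rewrite le_eqVlt => /predU1P [n20|n2p].
  have [a0 _] : exists a0 : A, True.
    case: (pselect (exists a : A, True)) => // Hn.
    have E : [set: A] = set0.
      by apply/seteqP; split=> // a _; apply: Hn; exists a.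
    have := probability_setT (pi' s); rewrite E measure0 => /eqP.
    by case/eqP => /esym/eqP; rewrite oner_eq0.
  have fc : forall a, f s a = f s a0.
    move=> a; have := hfa s a a0; rewrite -n20 mul0r normr_le0 subr_eq0.
    by move=> /eqP.
  have -> : Rintegral (pi' s) setT (f s) = f s a0.
    by rewrite -[RHS](@Rint_cst _ _ _ (pi' s)); apply: eq_Rintegral => a _; exact: fc.
  have -> : Rintegral (pi' sb) setT (f s) = f s a0.
    by rewrite -[RHS](@Rint_cst _ _ _ (pi' sb)); apply: eq_Rintegral => a _; exact: fc.
  by rewrite subrr normr0 -n20 !mul0r.
have W := @W_bound _ _ _ _ _ _ (fun a => f s a * n2^-1) _ _
  (@int_scale _ _ _ _ _ n2^-1 (hint s)) (@int_scale _ _ _ _ _ n2^-1 iS) (hLC s sb).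
rewrite !RintegralZr // in W; try by [apply: hint | apply: iS].
rewrite -mulrBl normrM [`|n2^-1|]gtr0_norm ?invr_gt0 // in W.
rewrite -mulrA mulrC -ler_pdivrMr //.
apply: W => x y; rewrite -mulrBl normrM [`|n2^-1|]gtr0_norm ?invr_gt0 //.
by rewrite ler_pdivrMr // mulrC hfa.
Qed.

Unset Implicit Arguments.
Theorem lemma5 (R : realType) (kS kA : measure_display)
  (S : measurableType kS) (A : measurableType kA)
  (dS : S -> S -> R) (dA : A -> A -> R)
  (hdS : is_metric dS) (hdA : is_metric dA)
  (gamma : R) (hg0 : 0 <= gamma) (hg1 : gamma < 1)
  (r : S -> A -> S -> R)
  (pi pi' : S -> probability A R) (Lpi' : R)
  (hLC : policy_LC dS dA pi' Lpi')
  (p p' : S -> A -> probability S R)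
  (V : S -> R)
  (hUp : forall s a, (p s a).-integrable setT (EFin \o Ufun gamma r V s a))
  (hUp' : forall s a, (p' s a).-integrable setT (EFin \o Ufun gamma r V s a))
  (hQpi : forall s, (pi s).-integrable setT (EFin \o Qfun gamma r V p s))
  (hQpi' : forall s, (pi' s).-integrable setT (EFin \o Qfun gamma r V p s))
  (hUpi' : forall s, (pi' s).-integrable setT
             (EFin \o (fun a => Rintegral (p' s a) setT (Ufun gamma r V s a))))
  (hV : forall s, V s = Rintegral (pi s) setT (Qfun gamma r V p s)) :
  (lipnorm dS (adv_both gamma r V pi' p')
   <= lipnorm dS (adv_pol gamma r V p pi')
      + (Lpi' + 1)%:E * lipnorm2 dS dA (adv_conf gamma r V p p'))%E.
Proof.
have [dS0 [dSeq _]] := hdS; have [dA0 [dAeq _]] := hdA.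
set W' := fun s a => Rintegral (p' s a) setT (Ufun gamma r V s a).
set Q := Qfun gamma r V p.
set f := adv_conf gamma r V p p'.
have hf : forall s a, f s a = W' s a - Q s a.
  move=> s a; rewrite /f /adv_conf.
  rewrite (RintegralB measurableT (hUp' s a) (@int_cst _ _ _ (p' s a) (Q s a))).
  by rewrite Rint_cst.
have hint : forall s, (pi' s).-integrable setT (EFin \o f s).
  move=> s; have -> : f s = fun a => W' s a - Q s a by apply/funext => a; exact: hf.
  exact: int_sub.
have hB : forall s, adv_both gamma r V pi' p' s =
    adv_pol gamma r V p pi' s + Rintegral (pi' s) setT (f s).
  move=> s.
  have E1 : adv_both gamma r V pi' p' s = Rintegral (pi' s) setT (W' s) - V s.
    rewrite /adv_both -[V s in RHS](@Rint_cst _ _ _ (pi' s)).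
    rewrite -(RintegralB measurableT (hUpi' s) (@int_cst _ _ _ (pi' s) (V s))).
    apply: eq_Rintegral => a _.
    rewrite (RintegralB measurableT (hUp' s a) (@int_cst _ _ _ (p' s a) (V s))).
    by rewrite Rint_cst.
  have E2 : adv_pol gamma r V p pi' s = Rintegral (pi' s) setT (Q s) - V s.
    rewrite /adv_pol (RintegralB measurableT (hQpi' s) (@int_cst _ _ _ (pi' s) (V s))).
    by rewrite Rint_cst.
  have E3 : Rintegral (pi' s) setT (f s) =
      Rintegral (pi' s) setT (W' s) - Rintegral (pi' s) setT (Q s).
    rewrite -(RintegralB measurableT (hUpi' s) (hQpi' s)).
    by apply: eq_Rintegral => a _; exact: hf.
  rewrite E1 E2 E3.
  set x1 := Rintegral _ _ _. set x2 := Rintegral _ _ _. lra.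
have N1ge0 := @lipnorm_ge0 _ _ dS (adv_pol gamma r V p pi').
have N2ge0 : (0 <= lipnorm2 dS dA f)%E by exact: lipnorm_ge0.
case: (pselect (exists x y, 0 < dS x y)) => [[x0 [y0 d0]] | Hno].
  have L0 : 0 <= Lpi'.
    have := le_trans (W_ge0 (pi' x0) (pi' y0) dA0) (hLC x0 y0).
    by rewrite lee_fin pmulr_lge0.
  have L1 : 0 < Lpi' + 1 by lra.
  apply: ge_ereal_sup => e [->|[x [y [dxy ->]]]].
    by apply: adde_ge0 => //; apply: mule_ge0 => //; rewrite lee_fin ltW.
  move: N1ge0 N2ge0.
  case E1 : (lipnorm dS (adv_pol gamma r V p pi')) => [n1| |] //;
  case E2 : (lipnorm2 dS dA f) => [n2| |] // n1ge0 n2ge0.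
  - rewrite -EFinM -EFinD lee_fin ler_pdivrMr // !hB.
    have P1 := lip_bound E1 dxy.
    have hfa : forall s a b, `|f s a - f s b| <= n2 * dA a b.
      move=> s a b; have [dab|] := ltP 0 (dA a b).
        have := @lip_bound _ _ _ (fun z => f z.1 z.2) n2 (s, a) (s, b) E2.
        by rewrite /= (proj2 (dSeq s s) erefl) add0r; apply.
      move=> dab; have : dA a b = 0 by apply/eqP; rewrite eq_le dab dA0.
      by move/dAeq ->; rewrite subrr normr0 (proj2 (dAeq b b) erefl) mulr0.
    have hfs : forall s sb a, `|f s a - f sb a| <= n2 * dS s sb.
      move=> s sb a; have [dab|] := ltP 0 (dS s sb).
        have := @lip_bound _ _ _ (fun z => f z.1 z.2) n2 (s, a) (sb, a) E2.
        by rewrite /= (proj2 (dAeq a a) erefl) addr0; apply.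
      move=> dab; have : dS s sb = 0 by apply/eqP; rewrite eq_le dab dS0.
      by move/dSeq ->; rewrite subrr normr0 (proj2 (dSeq sb sb) erefl) mulr0.
    have n2g : 0 <= n2 by rewrite -lee_fin.
    have G1 := G_bound hLC n2g hfa hfs hint x y.
    set a1 := adv_pol _ _ _ _ _ x; set a2 := adv_pol _ _ _ _ _ y.
    set g1 := Rintegral (pi' x) _ _; set g2 := Rintegral (pi' y) _ _.
    have -> : a1 + g1 - (a2 + g2) = (a1 - a2) + (g1 - g2) by lra.
    apply: (le_trans (ler_normD _ _)).
    rewrite mulrDl; apply: lerD => //.
  - by rewrite gt0_muley ?lte_fin // addey ?leey.
  - by rewrite -EFinM addye ?leey.
  - by rewrite gt0_muley ?lte_fin // addye ?leey.
have Hd : forall x y : S, x = y.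
  move=> x y; apply: (proj1 (dSeq x y)); apply/eqP; rewrite eq_le dS0 andbT.
  by rewrite leNgt; apply/negP => h; apply: Hno; exists x, y.
have f0 : forall s a, f s a = 0.
  move=> s a; rewrite hf /W' /Q /Qfun.
  rewrite (@eq_Rintegral _ _ _ (p' s a) _ (fun _ => Ufun gamma r V s a s)); last first.
    by move=> s' _; rewrite (Hd s' s).
  rewrite (@eq_Rintegral _ _ _ (p s a) _ (fun _ => Ufun gamma r V s a s)); last first.
    by move=> s' _; rewrite (Hd s' s).
  by rewrite !Rint_cst subrr.
have -> : lipnorm2 dS dA f = 0%E.
  apply/eqP; rewrite eq_le N2ge0 andbT.
  apply: ge_ereal_sup => e [->|[z [w [_ ->]]]] //.
  by rewrite /= !f0 subrr normr0 mul0r.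
rewrite mule0 adde0; apply: le_trans N1ge0.
apply: ge_ereal_sup => e [->|[x [y [dxy _]]]] //.
by exfalso; apply: Hno; exists x, y.
Qed.
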